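(* Let $d\geq 2$, $\varepsilon=\cos(2\pi/d)+i\sin(2\pi/d)$, and let $\mathbb{C}\langle Y_d\rangle=\mathbb{C}\langle y_0,\ldots,y_{d-1}\rangle$ be the free associative unital algebra, on which the cyclic group $C_d=\langle\rho\rangle$ acts by algebra automorphisms with $\rho(y_k)=\varepsilon^k y_k$, $k=0,\ldots,d-1$ (equivalently, $y_k=x_1+\varepsilon^{-k}x_2+\cdots+\varepsilon^{-k(d-1)}x_d$ and $\rho$ cyclically shifts $x_1\mapsto x_2\mapsto\cdots\mapsto x_d\mapsto x_1$). Let $U=\{u_0=y_0,u_1,\ldots,u_k\}$, where $u_1,\ldots,u_k$ are all commutative monomials $u=y_1^{n_1}\cdots y_{d-1}^{n_{d-1}}$ in $\mathbb{C}[y_0,\ldots,y_{d-1}]$ such that $1\leq n_1+\cdots+n_{d-1}\leq d$, $n_1+2n_2+\cdots+(d-1)n_{d-1}\equiv 0\pmod d$, and $u$ cannot be presented as a product of two or more monomials of this kind (so $U$ generates the commutative invariant algebra $\mathbb{C}[Y_d]^{C_d}$). Regard each $u_i=y_1^{n_{i,1}}\cdots y_{d-1}^{n_{i,d-1}}$ as the element of $\mathbb{C}\langle Y_d\rangle$ given by the same word. Then $U$ generates the $S$-algebra $(\mathbb{C}\langle Y_d\rangle^{C_d},\circ)$, i.e. the smallest subalgebra of $\mathbb{C}\langle Y_d\rangle$ containing $U$ and closed under the operations $\circ\sigma$ is $\mathbb{C}\langle Y_d\rangle^{C_d}$.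
   Context: The $S$-algebra structure $(\mathbb{C}\langle Y_d\rangle,\circ)$: on the homogeneous component of degree $n$ the symmetric group $\mathrm{Sym}_n$ acts on the right by permuting positions of variables, $(y_{j_1}\cdots y_{j_n})\circ\sigma=y_{j_{\sigma^{-1}(1)}}\cdots y_{j_{\sigma^{-1}(n)}}$, extended linearly. An $S$-subalgebra is a (unital) subalgebra that is a graded subspace whose homogeneous components of each degree $n$ are closed under $\circ\sigma$ for all $\sigma\in\mathrm{Sym}_n$; the $S$-subalgebra generated by a set of homogeneous elements is the smallest such subalgebra containing it. $\mathbb{C}\langle Y_d\rangle^{C_d}=\{f:\rho(f)=f\}$. *)

(* Defs.v *)
From Stdlib Require Import Rdefinitions Raxioms Rtrigo_def Rtrigo1.
From HB Require Import structures.
From mathcomp Require Import all_boot all_order all_algebra all_fingroup.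
From mathcomp Require Import complex.
From mathcomp Require Import Rstruct.

Set Implicit Arguments.
Unset Strict Implicit.
Unset Printing Implicit Defensive.

Import GRing.Theory Num.Theory.
Local Open Scope ring_scope.

Definition CC : Type := complex Rdefinitions.R.

Definition eps (d : nat) : CC :=
  Complex (cos (2 * PI / INR d))%R (sin (2 * PI / INR d))%R.

(* Elements of the free associative algebra C<y_0,...,y_{d-1}> are
   represented by their coefficient functions on words (seq 'I_d);
   a genuine (noncommutative) polynomial has finite support. *)
Definition word (d : nat) := seq 'I_d.
Definition series (d : nat) := word d -> CC.

Definition is_poly d (f : series d) : Prop :=
  exists s : seq (word d), forall w, f w != 0 -> w \in s.

Definition mono d (w : word d) : series d := fun v => if v == w then 1 else 0.
Definition pone d : series d := @mono d [::].
Definition padd d (f g : series d) : series d := fun w => f w + g w.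
Definition pscale d (c : CC) (f : series d) : series d := fun w => c * f w.
Definition pmul d (f g : series d) : series d :=
  fun w => \sum_(i < (size w).+1) f (take i w) * g (drop i w).

Definition hom d (n : nat) (f : series d) : series d :=
  fun w => if size w == n then f w else 0.

(* For sigma in Sym_n and a word w' of length n, the word j with
   j_k = w'_{sigma(k)}; then (y_j o sigma) = y_{w'}. *)
Definition permw d n (s : 'S_n) (w : word d) : word d :=
  match w with
  | [::] => [::]
  | a :: _ => [seq nth a w (s i) | i <- enum 'I_n]
  end.

(* right action  (y_{j_1}...y_{j_n}) o sigma = y_{j_{sigma^-1(1)}}...y_{j_{sigma^-1(n)}}
   on the homogeneous component of degree n, extended linearly *)
Definition pact d n (s : 'S_n) (f : series d) : series d :=
  fun w => if size w == n then f (permw s w) else 0.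

Definition rho d (f : series d) : series d :=
  fun w => (eps d) ^+ (sumn [seq val k | k <- w]) * f w.

Definition Cd_invariant d (f : series d) : Prop := is_poly f /\ rho f = f.

Definition S_subalgebra d (P : series d -> Prop) : Prop :=
  (forall f, P f -> is_poly f) /\
  P (@pone d) /\
  (forall f g, P f -> P g -> P (padd f g)) /\
  (forall c f, P f -> P (pscale c f)) /\
  (forall f g, P f -> P g -> P (pmul f g)) /\
  (forall n f, P f -> P (hom n f)) /\
  (forall n (s : 'S_n) f, P f -> P (pact s (hom n f))).

Definition S_generated d (G : series d -> Prop) (f : series d) : Prop :=
  forall P, S_subalgebra P -> (forall g, G g -> P g) -> P f.

(* exponent vectors n : 'I_d -> nat of commutative monomials in y_1..y_{d-1} *)
Definition expo (d : nat) := {ffun 'I_d -> nat}.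

Definition admissible d (n : expo d) : bool :=
  [forall k : 'I_d, (val k == 0%N) ==> (n k == 0%N)] &&
  (1 <= \sum_(k < d) n k <= d)%N &&
  ((\sum_(k < d) (val k * n k)) %% d == 0)%N.

Definition indecomposable d (n : expo d) : Prop :=
  ~ exists s : seq (expo d),
      [/\ (2 <= size s)%N, all (@admissible d) s &
          forall k, n k = \sum_(m <- s) m k].

Definition is_u d (n : expo d) : Prop := admissible n /\ indecomposable n.

Definition expo_word d (n : expo d) : word d :=
  flatten [seq nseq (n k) k | k <- enum 'I_d].

Definition U_set d (g : series d) : Prop :=
  (exists k : 'I_d, val k = 0%N /\ g = mono [:: k]) \/
  (exists n : expo d, is_u n /\ g = mono (expo_word n)).

(* Main.v *)
Require Import Defs.
From mathcomp Require Import all_boot all_algebra.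
From Stdlib Require Import Reals Lra.
From mathcomp Require Import all_boot all_order all_algebra all_fingroup complex Rstruct.
Import GRing.Theory Num.Theory.
Open Scope R_scope.
Lemma eps_pow d m : GRing.exp (eps d) m =
  Complex (cos (INR m * (2 * PI / INR d))) (sin (INR m * (2 * PI / INR d))).
Proof.
elim: m => [|m IH].
  by rewrite Rmult_0_l cos_0 sin_0 expr0.
rewrite GRing.exprS IH /eps.
have -> : forall t : R, (INR m.+1 * t = t + INR m * t) by move=> t; rewrite S_INR; ring.
rewrite cos_plus sin_plus.
rewrite /GRing.mul /=.
congr Complex; rewrite -?RmultE -?RplusE -?RminusE; ring.
Qed.

Lemma eps_d d : (0 < d)%N -> GRing.exp (eps d) d = GRing.one _.
Proof.
move=> hd; rewrite eps_pow.
have hd' : INR d <> 0 by apply: not_0_INR; apply/eqP; rewrite -lt0n.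
have -> : INR d * (2 * PI / INR d) = 2 * PI by field.
by rewrite cos_2PI sin_2PI.
Qed.

Lemma eps_r d r : (0 < r)%N -> (r < d)%N -> GRing.exp (eps d) r <> GRing.one _.
Proof.
move=> hr hrd; rewrite eps_pow => [[hc hs]].
have hd0 : 0 < INR d by apply: lt_0_INR; apply/ltP; apply: leq_ltn_trans hrd.
have hr0 : 0 < INR r by apply: lt_0_INR; apply/ltP.
have hrd' : INR r < INR d by apply: lt_INR; apply/ltP.
set x := INR r * (2 * PI / INR d) in hc hs.
have hx : x * INR d = 2 * PI * INR r by rewrite /x; field; lra.
have hpi := PI_RGT_0.
have h1 : 0 < x by rewrite /x; apply: Rmult_lt_0_compat => //; apply: Rdiv_lt_0_compat; lra.
have h2 : x < 2 * PI by nra.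
have := sin_eq_O_2PI_0 x; case; [lra|lra|exact hs|lra|].
case; [|lra].
by move=> ex; move: hc; rewrite ex cos_PI; rewrite -RealsE; lra.
Qed.

Lemma eps_pow1 d m : (2 <= d)%N -> (GRing.exp (eps d) m = GRing.one _) <-> (d %| m)%N.
Proof.
move=> hd.
have hd0 : (0 < d)%N by apply: leq_trans hd.
have -> : GRing.exp (eps d) m = GRing.exp (eps d) (m %% d).
  rewrite {1}(divn_eq m d) GRing.exprD mulnC GRing.exprM eps_d // GRing.expr1n GRing.mul1r //.
rewrite /dvdn; split.
  move=> h; apply/negPn/negP => hn; apply: (@eps_r d (m %% d)) => //.
    by rewrite lt0n.
  by rewrite ltn_mod.
by move/eqP=> ->; rewrite GRing.expr0.
Qed.
Close Scope R_scope.
From Stdlib Require Import FunctionalExtensionality Classical.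
Local Open Scope ring_scope.
Set Implicit Arguments.
Unset Strict Implicit.
Unset Printing Implicit Defensive.

Section Main.
Variables (d : nat) (hd : (2 <= d)%N).
Let hd0 : (0 < d)%N. Proof. exact: leq_trans hd. Qed.
Let x0 : 'I_d := Ordinal hd0.

Definition sw (w : word d) : nat := sumn [seq val k | k <- w].
Definition tot (n : expo d) : nat := (\sum_(k < d) n k)%N.
Definition wsum (n : expo d) : nat := (\sum_(k < d) val k * n k)%N.
Definition cnt (w : word d) : expo d := [ffun k => count_mem k w].

Lemma sum_pick (a : 'I_d) (F : 'I_d -> nat) : (\sum_(k < d) (a == k) * F k)%N = F a.
Proof.
rewrite (bigD1 a) //= eqxx mul1n big1 ?addn0 // => j hj.
by rewrite eq_sym (negbTE hj).
Qed.

Lemma tot_cnt w : tot (cnt w) = size w.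
Proof.
elim: w => [|a w IH].
  by rewrite /tot big1 // => k _; rewrite ffunE.
rewrite /tot.
under eq_bigr => k _ do rewrite ffunE /=.
rewrite big_split /= -IH /tot.
have -> : (\sum_(k < d) (a == k))%N = 1%N.
  by have := sum_pick a (fun _ => 1%N); under eq_bigr => k _ do rewrite muln1.
by congr addn; apply: eq_bigr => k _; rewrite ffunE.
Qed.

Lemma sw_cnt w : sw w = wsum (cnt w).
Proof.
elim: w => [|a w IH].
  by rewrite /wsum big1 // => k _; rewrite ffunE muln0.
rewrite /sw /= -/(sw w) IH.
have -> : wsum (cnt (a :: w)) = (\sum_(k<d) (val k * (a == k)) + wsum (cnt w))%N.
  by rewrite /wsum -big_split; apply: eq_bigr => k _; rewrite !ffunE /= mulnDr.
congr addn.
under eq_bigr => k _ do rewrite mulnC.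
by rewrite sum_pick.
Qed.

Lemma count_expo_word (n : expo d) k : count_mem k (expo_word n) = n k.
Proof.
rewrite /expo_word count_flatten -map_comp sumnE big_map big_enum /=.
under eq_bigr => j _ do rewrite /= count_nseq /=.
by rewrite -(sum_pick k n); apply: eq_big => // j; rewrite eq_sym.
Qed.

Lemma cnt_expo_word (n : expo d) : cnt (expo_word n) = n.
Proof. by apply/ffunP => k; rewrite ffunE count_expo_word. Qed.

Lemma cnt_perm u v : cnt u = cnt v -> perm_eq u v.
Proof.
move=> h; rewrite /perm_eq; apply/allP => x _ /=.
by have := congr1 (fun f : expo d => f x) h; rewrite !ffunE => ->.
Qed.


Lemma permw_nth n (s : 'S_n) (w : word d) : size w = n ->
  permw s w = [seq nth x0 w (s i) | i <- enum 'I_n].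
Proof.
case: w => [|a w'] /= hs.
  move: s; rewrite -hs => s.
  by have := size_enum_ord 0; case: (enum 'I_0).
apply: eq_map => i; apply: set_nth_default => /=; rewrite hs; exact: ltn_ord.
Qed.

Lemma size_permw n (s : 'S_n) (w : word d) : size w = n -> size (permw s w) = n.
Proof. by move=> h; rewrite permw_nth // size_map size_enum_ord. Qed.

Lemma perm_permw n (v w : word d) : size v = n ->
  (perm_eq w v <-> exists s : 'S_n, w = permw s v).
Proof.
move=> hv; have hv' : size v == n by rewrite hv.
have E : forall s : 'S_n, permw s v = [tuple tnth (Tuple hv') (s i) | i < n] :> seq _.
  move=> s; rewrite permw_nth // /=; apply: eq_map => i.
  by rewrite (tnth_nth x0).
split.
  by move/(@tuple_permP _ n w (Tuple hv')) => [p ->]; exists p; rewrite E.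
by move=> [p ->]; apply/(@tuple_permP _ n _ (Tuple hv')); exists p; rewrite E.
Qed.

Lemma permw_inj n (s : 'S_n) (v v' : word d) : size v = n -> size v' = n ->
  permw s v = permw s v' -> v = v'.
Proof.
move=> hv hv'; rewrite !permw_nth // => E.
apply: (eq_from_nth (x0:=x0)); first by rewrite hv hv'.
move=> j; rewrite hv => hj.
have := congr1 (fun l => nth x0 l (s^-1 (Ordinal hj))%g) E.
rewrite !(nth_map (Ordinal hj)) -?enumT ?size_enum_ord //.
have -> : nth (Ordinal hj) (enum 'I_n) (s^-1 (Ordinal hj))%g = (s^-1 (Ordinal hj))%g.
  by apply: val_inj; rewrite /= nth_enum_ord.
by rewrite permKV.
Qed.

Lemma mono_cat (u v : word d) : pmul (mono u) (mono v) = mono (u ++ v).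
Proof.
apply: functional_extensionality => w; rewrite /pmul /mono.
case: (eqVneq w (u ++ v)) => [->|hne].
  have hu : (size u < (size (u ++ v)).+1)%N by rewrite ltnS size_cat leq_addr.
  rewrite (bigD1 (Ordinal hu)) //= take_size_cat // drop_size_cat // !eqxx mulr1.
  rewrite big1 ?addr0 // => i hi.
  case: eqP => [ht|]; last by rewrite mul0r.
  exfalso; move/negP: hi; apply; apply/eqP/val_inj => /=.
  have := congr1 size ht; rewrite size_takel //.
  by rewrite -ltnS; exact: ltn_ord.
rewrite big1 // => i _.
case: (take i w =P u) => ht; case: (drop i w =P v) => hd'; rewrite ?mulr0 ?mul0r //.
by move/eqP: hne; rewrite -(cat_take_drop i w) ht hd'.
Qed.


Lemma pact_mono n (s : 'S_n) (w w' : word d) : size w' = n -> w = permw s w' ->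
  pact s (Defs.hom n (mono w)) = mono w'.
Proof.
move=> hw' ->; apply: functional_extensionality => v; rewrite /pact /Defs.hom /mono.
case: (eqVneq (size v) n) => hv.
  rewrite size_permw // eqxx.
  congr (if _ then _ else _); apply/eqP/eqP => [/permw_inj|->] //.
  by move=> h; apply: h.
case: eqP => // e; by move: hv; rewrite e hw' eqxx.
Qed.


Definition Zc (n : expo d) := [forall k : 'I_d, (val k == 0%N) ==> (n k == 0%N)].
Definition le_expo (m n : expo d) := forall k, (m k <= n k)%N.

Lemma admE (m : expo d) :
  admissible m = [&& Zc m, (0 < tot m)%N, (tot m <= d)%N & (d %| wsum m)%N].
Proof. by rewrite /admissible /dvdn -!andbA. Qed.

Lemma sub_zero (n : expo d) (i j : nat) : Zc n -> (i < j)%N -> (j <= d)%N ->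
  (d < tot n)%N ->
  (sw (take i (take d (expo_word n))) %% d = sw (take j (take d (expo_word n))) %% d)%N ->
  exists m, admissible m /\ le_expo m n.
Proof.
move=> hz hij hj hdn heq.
set w := expo_word n in heq *; set v := take d w in heq *.
have hsw : size w = tot n by rewrite -tot_cnt cnt_expo_word.
have hsv : size v = d by rewrite size_takel // hsw ltnW.
set u := drop i (take j v).
have Ej : take j v = take i v ++ u by rewrite /u -{1}(cat_take_drop i (take j v)) take_takel // ltnW.
have Esw : sw (take j v) = (sw (take i v) + sw u)%N by rewrite Ej /sw map_cat sumn_cat.
have hu : (sw u %% d = 0)%N.
  have : (sw (take i v) + 0 == sw (take i v) + sw u %[mod d])%N by rewrite addn0 -Esw heq.
  by rewrite eqn_modDl mod0n eq_sym => /eqP.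
have Ew : w = take i v ++ u ++ (drop j v ++ drop d w).
  by rewrite catA -Ej catA cat_take_drop cat_take_drop.
have hle : le_expo (cnt u) n.
  move=> k; have -> : n k = count_mem k w by rewrite count_expo_word.
  rewrite ffunE Ew !count_cat.
  by rewrite addnCA leq_addr.
exists (cnt u); split => //.
have hsu : size u = (j - i)%N by rewrite /u size_drop size_takel // hsv.
rewrite admE tot_cnt hsu -sw_cnt; apply/and4P; split.
- apply/forallP => k; apply/implyP => hk.
  have := hle k; move/forallP: hz => /(_ k); rewrite hk /= => /eqP ->.
  by rewrite leqn0.
- by rewrite subn_gt0.
- exact: leq_trans (leq_subr _ _) hj.
- by rewrite /dvdn hu.
Qed.

Lemma AB (n : expo d) : Zc n -> (d %| wsum n)%N -> (0 < tot n)%N ->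
  exists m, admissible m /\ le_expo m n.
Proof.
move=> hz hw h0; case: (leqP (tot n) d) => h.
  by exists n; split => //; rewrite admE hz h0 h hw.
set v := take d (expo_word n).
pose f (i : 'I_d.+1) : 'I_d := Ordinal (ltn_pmod (sw (take i v)) hd0).
have nf : ~ injective f.
  by move=> /leq_card; rewrite !card_ord ltnn.
have [i hi] := not_all_ex_not _ _ nf.
have [j hj] := not_all_ex_not _ _ hi.
have [hf hne] := imply_to_and _ _ hj.
have hf' : (sw (take i v) %% d = sw (take j v) %% d)%N by have := congr1 val hf.
case: (ltngtP i j) => hij.
- by apply: (sub_zero hz hij) => //; rewrite -ltnS.
- by apply: (sub_zero (i:=j) (j:=i) hz hij) => //; rewrite -ltnS.
- by exfalso; apply: hne; apply: val_inj.
Qed.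

Lemma IND (m : expo d) : admissible m -> exists m', is_u m' /\ le_expo m' m.
Proof.
suff : forall N m, (tot m <= N)%N -> admissible m -> exists m', is_u m' /\ le_expo m' m.
  by move=> /(_ (tot m) m (leqnn _)).
elim=> [|N IH] {}m hN ham.
  by move: ham; rewrite admE => /and4P [_ h0 _ _]; move: hN; rewrite leqn0 => /eqP h; rewrite h in h0.
case: (classic (indecomposable m)) => hi.
  by exists m; split => //; split.
move: hi => /NNPP [s [hs hall hsum]].
case: s hs hall hsum => [|a [|b t]] // _ /= /and3P [ha hb _] hsum.
have hle : le_expo a m by move=> k; rewrite hsum !big_cons leq_addr.
have hlt : (tot a + tot b <= tot m)%N.
  rewrite /tot -big_split; apply: leq_sum => k _; rewrite hsum !big_cons.
  by rewrite leq_add2l leq_addr.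
have hb0 : (0 < tot b)%N by move: hb; rewrite admE => /and4P [].
have haN : (tot a <= N)%N.
  by rewrite -ltnS; apply: leq_trans hN; apply: leq_trans hlt; rewrite -addn1 leq_add2l.
have [m' [hu hle']] := IH a haN ha.
by exists m'; split => // k; apply: leq_trans (hle k).
Qed.

Lemma C (n : expo d) : Zc n -> (d %| wsum n)%N ->
  exists L : seq (expo d), (forall m, m \in L -> is_u m) /\ forall k, n k = (\sum_(m <- L) m k)%N.
Proof.
suff : forall N n, (tot n <= N)%N -> Zc n -> (d %| wsum n)%N ->
  exists L : seq (expo d), (forall m, m \in L -> is_u m) /\ forall k, n k = (\sum_(m <- L) m k)%N.
  by move=> /(_ (tot n) n (leqnn _)).
have C0 : forall n : expo d, tot n = 0%N ->
  exists L : seq (expo d), (forall m, m \in L -> is_u m) /\ forall k, n k = (\sum_(m <- L) m k)%N.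
  move=> {}n /eqP; rewrite /tot sum_nat_eq0 => /forallP h.
  by exists [::]; split => // k; rewrite big_nil; apply/eqP; apply: h.
elim=> [|N IH] {}n hN hz hw.
  by apply: C0; apply/eqP; rewrite -leqn0.
case: (posnP (tot n)) => h0; first exact: C0.
have [m [ham hle]] := AB hz hw h0.
have [m' [hu hle']] := IND ham.
have hl : le_expo m' n by move=> k; apply: leq_trans (hle k).
have hum := hu; case: hum => hum _.
move: (hum); rewrite admE => /and4P [_ hm0 _ hmw].
pose n' : expo d := [ffun k => n k - m' k]%N.
have Et : tot n = (tot m' + tot n')%N.
  by rewrite /tot -big_split; apply: eq_bigr => k _; rewrite /n' ffunE /= (subnKC (hl k)).
have Ew : wsum n = (wsum m' + wsum n')%N.
  by rewrite /wsum -big_split; apply: eq_bigr => k _; rewrite /n' ffunE /= -mulnDr (subnKC (hl k)).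
have hz' : Zc n'.
  apply/forallP => k; apply/implyP => hk; rewrite /n' ffunE.
  by move/forallP: hz => /(_ k); rewrite hk /= => /eqP ->.
have hw' : (d %| wsum n')%N by rewrite -(dvdn_addr _ hmw) -Ew.
have hN' : (tot n' <= N)%N.
  by rewrite -ltnS; apply: leq_trans hN; rewrite Et -addn1 addnC leq_add2r.
have [L [hL hLs]] := IH n' hN' hz' hw'.
exists (m' :: L); split.
  by move=> x; rewrite inE => /orP [/eqP ->|]; [|apply: hL].
by move=> k; rewrite big_cons -hLs /n' ffunE (subnKC (hl k)).
Qed.

Section Gen.
Variable P : series d -> Prop.
Hypothesis hP : S_subalgebra P.
Hypothesis hU : forall g, U_set g -> P g.

Lemma G_perm (w w' : word d) : P (mono w) -> perm_eq w' w -> P (mono w').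
Proof.
move=> Pw hp.
have hs : size w = size w' by rewrite (perm_size hp).
have hp' : perm_eq w w' by rewrite perm_sym.
have [s hsw] := (perm_permw w (esym hs)).1 hp'.
rewrite -(pact_mono (esym hs) hsw).
by case: hP => [_ [_ [_ [_ [_ [Phom Pact]]]]]]; apply: Pact.
Qed.

Lemma G_cat (u v : word d) : P (mono u) -> P (mono v) -> P (mono (u ++ v)).
Proof.
by move=> Pu Pv; rewrite -mono_cat; case: hP => [_ [_ [_ [_ [Pmul _]]]]]; apply: Pmul.
Qed.

Lemma G_nil : P (mono [::]).
Proof. by case: hP => [_ [P1 _]]. Qed.

Lemma G_nseq m : P (mono (nseq m x0)).
Proof.
elim: m => [|m IH]; first exact: G_nil.
by rewrite /= -cat1s; apply: G_cat => //; apply: hU; left; exists x0.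
Qed.


Lemma G_expo (n : expo d) : Zc n -> (d %| wsum n)%N -> P (mono (expo_word n)).
Proof.
move=> hz hw; have [L [hL hLs]] := C hz hw.
have PL : P (mono (flatten [seq expo_word m | m <- L])).
  elim: L hL {hLs} => [|a L IH] hL /=; first exact: G_nil.
  apply: G_cat; last by apply: IH => m hm; apply: hL; rewrite inE hm orbT.
  by apply: hU; right; exists a; split => //; apply: hL; rewrite inE eqxx.
apply: (G_perm PL); apply: cnt_perm; apply/ffunP => k.
rewrite !ffunE count_expo_word hLs count_flatten -map_comp sumnE big_map.
by apply: eq_bigr => m _; rewrite /= count_expo_word.
Qed.

Lemma G_word (w : word d) : (d %| sw w)%N -> P (mono w).
Proof.
move=> hw.
pose n : expo d := [ffun k => if val k == 0%N then 0%N else count_mem k w].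
have hz : Zc n by apply/forallP => k; apply/implyP => hk; rewrite /n ffunE hk.
have hwn : wsum n = sw w.
  rewrite sw_cnt /wsum; apply: eq_bigr => k _; rewrite /n !ffunE.
  by case: eqP => [->|]; rewrite ?mul0n.
have hwn' : (d %| wsum n)%N by rewrite hwn.
have Pw := G_cat (G_nseq (count_mem x0 w)) (G_expo hz hwn').
apply: (G_perm Pw); apply: cnt_perm; apply/ffunP => k.
rewrite !ffunE count_cat count_nseq count_expo_word /n ffunE /=.
case: (eqVneq x0 k) => [<-|hk] /=; first by rewrite mul1n addn0.
have -> : (val k == 0%N) = false.
  by apply/negbTE; apply: contra hk => /eqP h; apply/eqP/val_inj; rewrite /= h.
by rewrite mul0n.
Qed.

End Gen.


Lemma rho_inv (f : series d) : rho f = f <-> forall w, f w != 0 -> (d %| sw w)%N.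
Proof.
split.
  move=> h w hw; have := congr1 (fun g => g w) h; rewrite /rho => e.
  apply: (eps_pow1 d (sw w) hd).1; apply: (mulIf hw); by rewrite mul1r.
move=> h; apply: functional_extensionality => w; rewrite /rho.
case: (eqVneq (f w) 0) => [->|hw]; first by rewrite mulr0.
by rewrite ((eps_pow1 d (sw w) hd).2 (h w hw)) mul1r.
Qed.

Definition Inv (f : series d) := is_poly f /\ forall w, f w != 0 -> (d %| sw w)%N.

Lemma fold_eval (f : series d) L v : uniq L ->
  foldr (fun w acc => padd (pscale (f w) (mono w)) acc) (pscale 0 (@pone d)) L v =
  if v \in L then f v else 0.
Proof.
elim: L => [|a L IH] /=; first by rewrite /pscale mul0r.
move=> /andP [ha hu]; rewrite /padd /pscale /mono IH // inE.
case: (eqVneq v a) => [->|hva] /=.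
  by rewrite (negbTE ha) mulr1 addr0.
by rewrite mulr0 add0r.
Qed.

Lemma backward (f : series d) : Inv f -> S_generated (@U_set d) f.
Proof.
move=> [[s hs] hinv] P hP hU.
set L := undup [seq w <- s | f w != 0].
have hL : forall w, w \in L -> f w != 0 by move=> w; rewrite mem_undup mem_filter => /andP [].
have -> : f = foldr (fun w acc => padd (pscale (f w) (mono w)) acc) (pscale 0 (@pone d)) L.
  apply: functional_extensionality => v; rewrite fold_eval ?undup_uniq //.
  case: ifP => // hv; apply/eqP; apply/negPn/negP => hf.
  by move: hv; rewrite mem_undup mem_filter hf hs.
have [_ [P1 [Padd [Pscale _]]]] := hP.
elim: L hL => [|a L IH] hL /=; first exact: Pscale.
apply: Padd; last by apply: IH => w hw; apply: hL; rewrite inE hw orbT.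
apply: Pscale; apply: (G_word hP hU).
by apply: hinv; apply: hL; rewrite inE eqxx.
Qed.

Lemma padd_nz (f g : series d) w : padd f g w != 0 -> f w != 0 \/ g w != 0.
Proof.
rewrite /padd; case: (eqVneq (f w) 0) => [->|h]; last by left.
by rewrite add0r; right.
Qed.

Lemma pscale_nz c (f : series d) w : pscale c f w != 0 -> f w != 0.
Proof. by rewrite /pscale; apply: contraNneq => ->; rewrite mulr0. Qed.

Lemma pmul_nz (f g : series d) w : pmul f g w != 0 ->
  exists i : 'I_(size w).+1, f (take i w) != 0 /\ g (drop i w) != 0.
Proof.
rewrite /pmul => h.
have [/existsP [i /andP [h1 h2]]|] :=
  boolP [exists i : 'I_(size w).+1, (f (take i w) != 0) && (g (drop i w) != 0)].
  by exists i.
rewrite negb_exists => /forallP hn; exfalso; move/negP: h; apply.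
apply/eqP; apply: big1 => i _; have := hn i; rewrite negb_and !negbK.
by case/orP => /eqP ->; rewrite ?mul0r ?mulr0.
Qed.

Lemma hom_nz n (f : series d) w : Defs.hom n f w != 0 -> f w != 0.
Proof. by rewrite /Defs.hom; case: ifP => //; rewrite eqxx. Qed.

Lemma sw_cat u v : sw (u ++ v) = (sw u + sw v)%N.
Proof. by rewrite /sw map_cat sumn_cat. Qed.

Lemma mono_Inv (w : word d) : (d %| sw w)%N -> Inv (mono w).
Proof.
move=> h; split.
  exists [:: w] => v; rewrite /mono; case: (v =P w) => [-> _|_]; first exact: mem_head.
  by rewrite eqxx.
by move=> v; rewrite /mono; case: (v =P w) => [-> //|_]; rewrite eqxx.
Qed.

Lemma Inv_S : S_subalgebra Inv.
Proof.
split; first by move=> f [].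
split; first exact: mono_Inv.
split.
  move=> f g [[s1 h1] i1] [[s2 h2] i2]; split.
    by exists (s1 ++ s2) => w /padd_nz [/h1|/h2] hw; rewrite mem_cat hw ?orbT.
  by move=> w /padd_nz [/i1|/i2].
split.
  move=> c f [[s1 h1] i1]; split.
    by exists s1 => w /pscale_nz /h1.
  by move=> w /pscale_nz /i1.
split.
  move=> f g [[s1 h1] i1] [[s2 h2] i2]; split.
    exists [seq x ++ y | x <- s1, y <- s2] => w /pmul_nz [i [hf hg]].
    by rewrite -(cat_take_drop i w); apply: allpairs_f; [apply: h1|apply: h2].
  move=> w /pmul_nz [i [hf hg]].
  by rewrite -(cat_take_drop i w) sw_cat dvdn_add //; [apply: i1|apply: i2].
split.
  move=> n f [[s1 h1] i1]; split.
    by exists s1 => w /hom_nz /h1.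
  by move=> w /hom_nz /i1.
move=> n s f [[s1 h1] i1].
have key : forall w, pact s (Defs.hom n f) w != 0 ->
    f (permw s w) != 0 /\ perm_eq w (permw s w).
  move=> w; rewrite /pact; case: (size w =P n) => [hw|_]; last by rewrite eqxx.
  move=> /hom_nz hf; split => //.
  rewrite perm_sym; apply/(perm_permw _ hw); by exists s.
split.
  exists (flatten [seq permutations x | x <- s1]) => w /key [hf hp].
  apply/flatten_mapP; exists (permw s w); first exact: h1.
  by rewrite mem_permutations.
move=> w /key [hf hp].
have -> : sw w = sw (permw s w) by apply: perm_sumn; apply: perm_map.
exact: i1.
Qed.

Lemma U_Inv g : U_set g -> Inv g.
Proof.
case=> [[k [hk ->]]|[n [[ha _] ->]]]; apply: mono_Inv.
  by rewrite /sw /= hk.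
rewrite sw_cnt cnt_expo_word.
by move: ha; rewrite admE => /and4P [].
Qed.

End Main.


Theorem theorem4p1 (d : nat) (hd : (2 <= d)%N) (f : series d) :
  S_generated (@U_set d) f <-> Cd_invariant f.
Proof.
split.
  move=> h; have [hp hi] := h _ (Inv_S hd) (@U_Inv d).
  by split => //; apply/(rho_inv hd).
move=> [hp hr]; apply: (backward hd); split => //.
exact/(rho_inv hd).
Qed.
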